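(* Let $a\le r$ be positive integers. Then there are infinitely many $n\ge r^{\Omega(r)}$ (each a multiple of $r$) such that, for any desired $\epsilon\in(0,0.5)$ and any positive integer $h$ with $hr\ge\Omega\!\left(\frac{n^{2/3}}{\epsilon}\right)$ (and $\frac nr a+h<n$), there is an MR $(n,r,h,a)$-LRC over a field of size at most $n^{\frac{2h}{3}(1+\epsilon)}$.
   Context: Definition: let $\ell$ be a prime power, $a,g,r,h$ positive integers with $ga+h<gr$, $n=gr$, $k=n-ga-h$. An MR (maximally recoverable) $(n,r,h,a)_\ell$-LRC is an $[n,k]$ linear code over $\mathbb{F}_\ell$ with a parity-check matrix $H$ of the block form whose first $ga$ rows are block diagonal with diagonal blocks $A_1,\dots,A_g$ (each $a\times r$, coordinates split into $g$ consecutive groups of size $r$) and whose last $h$ rows are $(D_1|\cdots|D_g)$ with each $D_i$ of size $h\times r$, such that (i) each $A_i$ generates an $[r,a,r-a+1]_\ell$ MDS code, and (ii) every set of $ag+h$ columns of $H$ consisting of any $a$ columns from each group together with any $h$ further columns is linearly independent over $\mathbb{F}_\ell$. ''Over a field of size $\ell$'' means an MR $(n,r,h,a)_\ell$-LRC. $\Omega(\cdot)$ is the usual asymptotic notation (lower bound up to an absolute positive constant). *)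

(* Defs.v *)
From Stdlib Require Import Reals.
From mathcomp Require Import all_boot all_order all_algebra.
Set Implicit Arguments. Unset Strict Implicit. Unset Printing Implicit Defensive.
Import GRing.Theory.
Local Open Scope ring_scope.

Definition wt (F : fieldType) (r : nat) (v : 'rV[F]_r) : nat :=
  #|[set j : 'I_r | v ord0 j != 0]|.

Definition generates_MDS (F : fieldType) (a r : nat) (A : 'M[F]_(a, r)) : Prop :=
  \rank A = a /\
  (forall x : 'rV[F]_a, x != 0 -> (r - a + 1 <= wt (x *m A))%N) /\
  (exists x : 'rV[F]_a, x != 0 /\ wt (x *m A) = (r - a + 1)%N).

(* Entries of the parity-check matrix
      H = [ diag(A_1,...,A_g) ; (D_1 | ... | D_g) ]
   Rows are indexed by ('I_g * 'I_a) + 'I_h (the g blocks of a local rows, then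
   the h global rows); columns by 'I_g * 'I_r (group i, position j in the group),
   i.e. the n = g r coordinates split into g consecutive groups of size r. *)
Definition pcm (F : fieldType) (g r a h : nat)
    (A : 'I_g -> 'M[F]_(a, r)) (D : 'I_g -> 'M[F]_(h, r))
    (row : ('I_g * 'I_a) + 'I_h) (col : 'I_g * 'I_r) : F :=
  match row with
  | inl (i', p) => if i' == col.1 then A col.1 p col.2 else 0
  | inr q => D col.1 q col.2
  end.

Definition cols_indep (F : fieldType) (rowT colT : finType)
    (H : rowT -> colT -> F) (U : {set colT}) : Prop :=
  forall lam : colT -> F,
    (forall x : rowT, \sum_(c in U) lam c * H x c = 0) ->
    forall c, c \in U -> lam c = 0.

Definition is_MR_LRC (F : fieldType) (g r h a : nat)
    (A : 'I_g -> 'M[F]_(a, r)) (D : 'I_g -> 'M[F]_(h, r)) : Prop :=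
  (forall i, generates_MDS (A i)) /\
  (forall T S : {set 'I_g * 'I_r},
      (forall i : 'I_g, #|[set c in T | c.1 == i]| = a) ->
      [disjoint T & S] -> #|S| = h ->
      cols_indep (pcm A D) (T :|: S)).

Definition MR_LRC (F : fieldType) (n r h a : nat) : Prop :=
  [&& (0 < a)%N, (0 < r)%N, (0 < h)%N, (0 < n %/ r)%N, (r %| n)%N &
      (n %/ r * a + h < n)%N] /\
      (exists (A : 'I_(n %/ r) -> 'M[F]_(a, r)) (D : 'I_(n %/ r) -> 'M[F]_(h, r)),
        is_MR_LRC A D).

(* Main.v *)
Require Import Defs.
From mathcomp Require Import all_boot all_order all_algebra all_field.
From Stdlib Require Import Reals.
Set Warnings "-notation-overridden,-ambiguous-paths,-deprecated".
From Stdlib Require Import Lra Classical.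
From mathcomp Require Import zify ring.
From mathcomp Require Import ssrnat.
Import GRing.Theory.

Lemma expn_pow (m n : nat) : (m ^ n)%N = Nat.pow m n.
Proof. by elim: n => [|n IH] //; rewrite expnS IH. Qed.

Lemma exp_pow_nat (x : R) (n : nat) : (exp x ^ n = exp (INR n * x))%R.
Proof.
elim: n => [|n IH]; first by rewrite /= Rmult_0_l exp_0.
rewrite -tech_pow_Rmult IH -exp_plus S_INR; congr exp; lra.
Qed.

Lemma succ_pow_bound (h : nat) : (h.+1 ^ h <= 3 * h ^ h)%N.
Proof.
case: h => [|h]; first by [].
apply/leP; apply: INR_le; rewrite !expn_pow.
rewrite (mult_INR 3) (pow_INR h.+2) (pow_INR h.+1) (S_INR h.+1).
set x := INR h.+1.
have hx : (0 < x)%R by apply: lt_0_INR; lia.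
have -> : (x + 1 = x * (1 + / x))%R.
  by rewrite Rmult_plus_distr_l Rmult_1_r Rinv_r //; lra.
rewrite Rpow_mult_distr.
have H1 : ((1 + / x) ^ h.+1 <= exp (/ x) ^ h.+1)%R.
  apply: pow_incr; split; last exact: exp_ineq1_le.
  have := Rinv_0_lt_compat x hx; lra.
rewrite exp_pow_nat -/x Rinv_r in H1; last lra.
have := exp_le_3.
have hp : (0 < x ^ h.+1)%R by apply: pow_lt.
have -> : INR 3 = 3%R by rewrite /= ; lra.
nra.
Qed.

Lemma pow_fact_bound (h : nat) : (h ^ h <= 3 ^ h * h`!)%N.
Proof.
elim: h => [|h IH]; first by [].
rewrite factS !expnS.
have H := succ_pow_bound h.
have : (h.+1 * h.+1 ^ h <= h.+1 * (3 * h ^ h))%N by rewrite leq_mul2l H orbT.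
move=> H2.
apply: (leq_trans H2).
nia.
Qed.

Lemma ffact_le_pow (n j : nat) : (n ^_ j <= n ^ j)%N.
Proof.
elim: j => [|j IH]; first by rewrite ffactn0.
rewrite ffactnSr expnS mulnC leq_mul //; exact: leq_subr.
Qed.

Lemma bin_fact_le (n j : nat) : ('C(n, j) * j`! <= n ^ j)%N.
Proof. by rewrite bin_ffact ffact_le_pow. Qed.

Lemma leq_expl (m n e : nat) : (m <= n)%N -> (m ^ e <= n ^ e)%N.
Proof. move=> H; elim: e => [|e IH] //; by rewrite !expnS leq_mul. Qed.

Lemma fact_split (j d : nat) : ((j + d)`! <= j`! * (j + d) ^ d)%N.
Proof.
elim: d => [|d IH]; first by rewrite addn0 muln1.
rewrite addnS factS expnS.
have H : ((j + d) ^ d <= (j + d).+1 ^ d)%N by apply: leq_expl.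
apply: (leq_trans (leq_mul (leqnn _) IH)).
by rewrite mulnCA leq_mul2l leq_mul2l H !orbT.
Qed.

Lemma count_bound (n Y h j : nat) : (j <= h)%N -> (h <= n * Y)%N ->
  ('C(n, j) * Y ^ j * h ^ h <= 3 ^ h * (n * Y) ^ h)%N.
Proof.
move=> jh hnY.
have H1 := pow_fact_bound h.
have H2 : (h`! <= j`! * h ^ (h - j))%N.
  by have := fact_split j (h - j); rewrite subnKC.
have H3 := bin_fact_le n j.
have H4 : (h ^ (h - j) <= (n * Y) ^ (h - j))%N by apply: leq_expl.
have E : ((n * Y) ^ h = (n * Y) ^ j * (n * Y) ^ (h - j))%N by rewrite -expnD subnKC.
rewrite E expnMn.
set C := 'C(n, j); set Yj := Y ^ j; set nj := n ^ j; set f := j`!.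
set hh := h ^ h; set T := 3 ^ h; set hf := h`!; set hd := h ^ (h - j);
set nd := (n * Y) ^ (h - j).
apply: (@leq_trans (C * Yj * (T * (f * hd)))).
  by rewrite leq_mul2l (leq_trans H1) ?orbT // leq_mul2l H2 orbT.
have -> : (C * Yj * (T * (f * hd)) = T * Yj * ((C * f) * hd))%N.
  by ring.
have -> : (T * (nj * Yj * nd) = T * Yj * (nj * nd))%N.
  by ring.
by rewrite leq_mul2l; apply/orP; right; apply: leq_mul.
Qed.

Section Vander.
Variable F : fieldType.
Local Open Scope ring_scope.

Lemma local_zero (r a : nat) (alpha : 'I_r -> F) (I : finType) (U : {set I})
  (pos : I -> 'I_r) (lam : I -> F) :
  injective alpha -> {in U &, injective pos} -> (#|U| <= a)%N ->
  (forall p : 'I_a, \sum_(c in U) lam c * alpha (pos c) ^+ p = 0) ->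
  forall c, c \in U -> lam c = 0.
Proof.
move=> ainj pinj cardU H c0 c0U.
set s := [seq alpha (pos c) | c <- enum (U :\ c0)].
set L := \prod_(y <- s) ('X - y%:P).
have sizeL : (size L <= a)%N.
  rewrite /L size_prod_XsubC size_map -cardE.
  by move: cardU; rewrite (cardsD1 c0 U) c0U.
have E : \sum_(c in U) lam c * L.[alpha (pos c)] = 0.
  transitivity (\sum_(i < a) L`_i * \sum_(c in U) lam c * alpha (pos c) ^+ i).
    rewrite (eq_bigr (fun c => \sum_(i < a) lam c * (L`_i * alpha (pos c) ^+ i))); last first.
      by move=> c _; rewrite (horner_coef_wide _ sizeL) mulr_sumr.
    rewrite exchange_big /=; apply: eq_bigr => i _.
    by rewrite mulr_sumr; apply: eq_bigr => c _; rewrite mulrCA.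
  by rewrite big1 // => i _; rewrite H mulr0.
rewrite (bigD1 c0) //= big1 ?addr0 in E; last first.
  move=> c /andP [cU cc0].
  have : root L (alpha (pos c)).
    rewrite root_prod_XsubC; apply: map_f.
    by rewrite mem_enum !inE cc0.
  by move/eqP => ->; rewrite mulr0.
move/eqP: E; rewrite mulf_eq0 => /orP [/eqP //|].
rewrite -/(root L _) root_prod_XsubC => /mapP [c].
rewrite mem_enum !inE => /andP [cc0 cU] /ainj /pinj.
by move=> /(_ c0U cU) E; rewrite E eqxx in cc0.
Qed.


Definition vander (a r : nat) (alpha : 'I_r -> F) : 'M[F]_(a, r) :=
  \matrix_(p < a, j < r) alpha j ^+ p.

Lemma wt_eq (r : nat) (v : 'rV[F]_r) :
  wt v = subn r #|[set j : 'I_r | v ord0 j == 0 :> F]|.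
Proof.
rewrite /wt.
have -> : [set j : 'I_r | v ord0 j != 0 :> F] = ~: [set j | v ord0 j == 0 :> F].
  by apply/setP => j; rewrite !inE.
have E : addn #|[set j | v ord0 j == 0 :> F]| #|~: [set j | v ord0 j == 0 :> F]| = r by rewrite cardsC card_ord.
move: E; set Z := [set j | v ord0 j == 0 :> F]; move: #|Z| #|~: Z| => x y E; lia.
Qed.

Lemma vander_MDS (a r : nat) (alpha : 'I_r -> F) :
  (0 < a)%N -> (a <= r)%N -> injective alpha -> generates_MDS (vander a r alpha).
Proof.
case: a => [//|a] _ ar ainj.
set V := vander a.+1 r alpha.
pose Pof (x : 'rV[F]_a.+1) := \poly_(p < a.+1) x ord0 (inord p).
have mulV : forall x j, (x *m V) ord0 j = (Pof x).[alpha j].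
  move=> x j; rewrite mxE horner_poly; apply: eq_bigr => i _.
  by rewrite !mxE inord_val.
have Pof0 : forall x, Pof x = 0 -> x = 0.
  move=> x H; apply/rowP => i.
  have := congr1 (fun p : {poly F} => p`_i) H.
  by rewrite coef_poly ltn_ord inord_val coef0 !mxE (ord1 ord0).
have wtb : forall x : 'rV_a.+1, x != 0 -> (r - a.+1 + 1 <= wt (x *m V))%N.
  move=> x xn0.
  have Pn0 : Pof x != 0 by apply: contra xn0 => /eqP /Pof0 ->.
  set Z := [set j | (x *m V) ord0 j == 0].
  have : (size [seq alpha j | j <- enum Z] < size (Pof x))%N.
    apply: max_poly_roots => //; last by rewrite map_inj_uniq ?enum_uniq.
    apply/allP => y /mapP [j]; rewrite mem_enum inE => jZ ->.
    by rewrite /root -mulV.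
  rewrite size_map -cardE => HZ.
  have := leq_trans HZ (size_poly _ _).
  rewrite wt_eq -/Z => HZ2.
  rewrite addn1 -subSn // subSS; apply: leq_sub2l.
  by rewrite -ltnS.
split.
  apply/eqP; apply: inj_row_free => v vA0; apply/eqP; apply/negPn/negP => vn0.
  have := wtb v vn0; rewrite vA0 /wt.
  have -> : [set j : 'I_r | (0 : 'rV[F]_r) ord0 j != 0] = set0.
    by apply/setP => j; rewrite !inE mxE eqxx.
  by rewrite cards0 addn1.
split; first exact: wtb.
set s0 := take a (enum 'I_r).
set P := \prod_(y <- [seq alpha j | j <- s0]) ('X - y%:P).
have s0size : size s0 = a by rewrite size_takel // size_enum_ord; apply: ltnW.
have sizeP : size P = a.+1 by rewrite size_prod_XsubC size_map s0size.
exists (\row_(p < a.+1) P`_p).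
have PofP : Pof (\row_(p < a.+1) P`_p) = P.
  rewrite /Pof -[in RHS](coefK P) sizeP; apply: eq_poly => i ilt.
  by rewrite mxE inordK.
split.
  apply/eqP => H; have := congr1 (fun x : 'rV_a.+1 => x ord0 ord_max) H.
  rewrite !mxE /=.
  have : lead_coef P = 1 by apply/eqP; apply: monic_prod_XsubC.
  by rewrite lead_coefE sizeP /= => -> /eqP; rewrite oner_eq0.
rewrite wt_eq.
have -> : [set j | (\row_(p < a.+1) P`_p *m V) ord0 j == 0] = [set j | j \in s0].
  apply/setP => j; rewrite !inE mulV PofP -/(root P _) root_prod_XsubC.
  by rewrite (mem_map ainj).
rewrite cardsE.
have -> : #|[pred j | j \in s0]| = size s0.
  by apply/card_uniqP; rewrite take_uniq ?enum_uniq.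
by rewrite s0size addn1 -subSn // subSS.
Qed.

End Vander.


Set Implicit Arguments. Unset Strict Implicit. Unset Printing Implicit Defensive.

Section Greedy.
Variables (F : finFieldType) (g r a : nat) (alpha : 'I_r -> F).
Hypothesis ainj : injective alpha.
Local Open Scope ring_scope.

Local Notation colT := ('I_g * 'I_r)%type.
Definition AA (i : 'I_g) : 'M[F]_(a, r) := vander F a r alpha.

Definition loc0 (U : {set colT}) (lam : colT -> F) :=
  forall (i : 'I_g) (p : 'I_a),
    \sum_(c in U) lam c * (if i == c.1 then AA c.1 p c.2 else 0) = 0.
Definition glob0 (d : nat -> colT -> F) (j : nat) (U : {set colT}) (lam : colT -> F) :=
  forall q, (q < j)%N -> \sum_(c in U) lam c * d q c = 0.
Definition indep (d : nat -> colT -> F) (j : nat) (U : {set colT}) :=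
  forall lam, loc0 U lam -> glob0 d j U lam -> forall c, c \in U -> lam c = 0.
Definition grp (S : {set colT}) : {set 'I_g} := [set c.1 | c in S].
Definition good (j : nat) (x : {set colT} * {set colT}) : bool :=
  [&& [disjoint x.1 & x.2], #|x.2| == j &
      [forall i, #|[set c in x.1 | c.1 == i]| == (if i \in grp x.2 then a else 0)%N]].
Definition Inv d j := forall x, good j x -> indep d j (x.1 :|: x.2).

Lemma sum_sub (U U' : {set colT}) (f : colT -> F) :
  U' \subset U -> (forall c, c \in U -> c \notin U' -> f c = 0) ->
  \sum_(c in U) f c = \sum_(c in U') f c.
Proof.
move=> sub H; rewrite (big_setID U') /=.
have -> : U :&: U' = U'.
  apply/setP => c; rewrite inE; case: (boolP (c \in U')) => [cU'|]; last by rewrite andbF.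
  by rewrite (subsetP sub _ cU').
rewrite [X in _ + X]big1 ?addr0 //.
by move=> c; rewrite inE => /andP [cn cU]; apply: H.
Qed.

Lemma loc0_sub (U U' : {set colT}) (lam : colT -> F) : U' \subset U -> (forall c, c \in U -> c \notin U' -> lam c = 0) ->
  loc0 U lam -> loc0 U' lam.
Proof.
move=> sub H L i p; rewrite -[RHS](L i p); symmetry; apply: sum_sub => // c cU cn.
by rewrite H // mul0r.
Qed.

Lemma glob0_sub d j (U U' : {set colT}) (lam : colT -> F) : U' \subset U -> (forall c, c \in U -> c \notin U' -> lam c = 0) ->
  glob0 d j U lam -> glob0 d j U' lam.
Proof.
move=> sub H L q qj; rewrite -[RHS](L q qj); symmetry; apply: sum_sub => // c cU cn.
by rewrite H // mul0r.
Qed.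

Lemma loc_group (U : {set colT}) (lam : colT -> F) (i : 'I_g) :
  (#|[set c in U | c.1 == i]| <= a)%N -> loc0 U lam ->
  forall c, c \in U -> c.1 = i -> lam c = 0.
Proof.
move=> cardU L c cU ci.
have := @local_zero F r a alpha colT [set c in U | c.1 == i] snd lam ainj.
apply=> //; last by rewrite inE cU ci eqxx.
  move=> [x1 x2] [y1 y2]; rewrite !inE /= => /andP [_ /eqP ->] /andP [_ /eqP ->] ->.
  by [].
move=> p; rewrite -[RHS](L i p).
rewrite (sum_sub (U := U) (U' := [set c in U | c.1 == i])); last first.
- move=> t tU; rewrite inE tU /= eq_sym => /negbTE ->; by rewrite mulr0.
- by apply/subsetP => t; rewrite inE => /andP [].
apply: eq_bigr => t; rewrite inE => /andP [_ /eqP ->]; rewrite eqxx /AA mxE.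
by [].
Qed.


Lemma grpS (S1 S2 : {set colT}) : S1 \subset S2 -> grp S1 \subset grp S2.
Proof. by move=> H; apply: imsetS. Qed.

Lemma in_grp (S : {set colT}) c : c \in S -> c.1 \in grp S.
Proof. by move=> cS; apply: imset_f. Qed.

Lemma zero_from_c d j x c (lam : colT -> F) :
  Inv d j -> good j.+1 x -> c \in x.2 -> loc0 (x.1 :|: x.2) lam ->
  glob0 d j (x.1 :|: x.2) lam -> lam c = 0 ->
  forall t, t \in x.1 :|: x.2 -> lam t = 0.
Proof.
move=> Hinv gx cS L G lc0.
case/and3P: gx => dis /eqP cardS /forallP cnt.
set S' := x.2 :\ c.
set T' := [set t in x.1 | t.1 \in grp S'].
have S'sub : S' \subset x.2 by apply: subsetDl.
have T'sub : T' \subset x.1 by apply/subsetP => t; rewrite inE => /andP [].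
have gT : good j (T', S').
  apply/and3P; split => /=.
  - exact: disjointW T'sub S'sub dis.
  - by move: cardS; rewrite (cardsD1 c x.2) cS add1n => -[->].
  - apply/forallP => i; case: ifP => iS.
      have -> : [set t in T' | t.1 == i] = [set t in x.1 | t.1 == i].
        apply/setP => t; rewrite !inE; case: (boolP (t.1 == i)) => [/eqP ->|];
          by rewrite ?iS ?andbT ?andbF.
      by have := cnt i; rewrite (subsetP (grpS S'sub) _ iS).
    rewrite cards_eq0; apply/eqP/setP => t; rewrite !inE.
    by case: (boolP (t.1 == i)) => [/eqP ->|]; rewrite ?iS ?andbF ?andbT.
have Usub : T' :|: S' \subset x.1 :|: x.2 by apply: setUSS.
have Zout : forall t, t \in x.1 :|: x.2 -> t \notin T' :|: S' -> lam t = 0.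
  move=> t tU tn.
  case: (eqVneq t c) => [-> //|tc].
  have tS : t \notin x.2.
    by apply: contra tn => tS; rewrite inE; apply/orP; right; rewrite !inE tc.
  have tT : t \in x.1 by move: tU; rewrite inE (negbTE tS) orbF.
  have tG : t.1 \notin grp S'.
    by apply: contra tn => tG; rewrite inE; apply/orP; left; rewrite inE tT.
  have t1 : t.1 = c.1.
    have := cnt t.1; case: ifP => [/imsetP [u uS tu] _|_].
      case: (eqVneq u c) => [<- //|uc].
      by move: tG; rewrite tu in_grp // !inE uc.
    rewrite cards_eq0 => /eqP /setP /(_ t); rewrite !inE tT eqxx.
    by [].
  apply: (@loc_group ((x.1 :|: x.2) :\ c) lam c.1); last first.
  - by [].
  - by rewrite in_setD1 tc tU.
  - apply: loc0_sub L; first by apply: subsetDl.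
    by move=> u uU; rewrite in_setD1 uU andbT negbK => /eqP ->.
  have ca : #|[set u in x.1 | u.1 == c.1]| = a.
    by have := cnt c.1; rewrite in_grp // => /eqP.
  rewrite -ca; apply: subset_leq_card; apply/subsetP => u.
  rewrite !inE => /andP [/andP [uc uU] /eqP u1]; rewrite u1 eqxx andbT.
  move: uU => /orP [//|uS].
  by move: tG; rewrite t1 -u1 in_grp // !inE uc.
have := Hinv _ gT lam (loc0_sub Usub Zout L) (glob0_sub Usub Zout G).
move=> Z t tU; case: (boolP (t \in T' :|: S')) => [|tn]; first exact: Z.
exact: Zout.
Qed.


Definition upd (d : nat -> colT -> F) (j : nat) (v : {ffun colT -> F}) : nat -> colT -> F :=
  fun q => if q == j then (v : colT -> F) else d q.

Lemma glob0_upd d j v U lam : glob0 (upd d j v) j.+1 U lam ->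
  glob0 d j U lam /\ \sum_(c in U) lam c * v c = 0.
Proof.
move=> G; split; last by have := G j (ltnSn j); rewrite /upd eqxx.
move=> q qj; have := G q (ltnW qj); rewrite /upd.
by rewrite (ltn_eqF qj).
Qed.

Lemma bad_set d j x : Inv d j -> good j.+1 x ->
  exists B : {set {ffun colT -> F}},
    (#|F| * #|B| <= #|F| ^ #|{: colT}|)%N /\
    forall v, v \notin B -> indep (upd d j v) j.+1 (x.1 :|: x.2).
Proof.
move=> Hinv gx; set U := x.1 :|: x.2.
case: (classic (exists lam0, [/\ loc0 U lam0, glob0 d j U lam0 &
                                  exists2 c0, c0 \in U & lam0 c0 != 0])).
- move=> [lam0 [L0 G0 [c0 c0U nz]]].
  set B := [set v : {ffun colT -> F} | \sum_(c in U) lam0 c * v c == 0].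
  exists B; split.
  + pose f (p : F * {ffun colT -> F}) : {ffun colT -> F} :=
      [ffun c => p.2 c + (if c == c0 then p.1 else 0)].
    have sf : forall p, \sum_(c in U) lam0 c * f p c =
                        \sum_(c in U) lam0 c * p.2 c + lam0 c0 * p.1.
      move=> p; rewrite (eq_bigr (fun c => lam0 c * p.2 c + lam0 c * (if c == c0 then p.1 else 0))); last first.
        by move=> c _; rewrite ffunE mulrDr.
      rewrite big_split /=; congr (_ + _).
      rewrite (bigD1 c0) //= eqxx big1 ?addr0 //.
      by move=> c /andP [_ /negbTE ->]; rewrite mulr0.
    have inj : {in setX [set: F] B &, injective f}.
      move=> [y1 v1] [y2 v2]; rewrite !inE /= => B1 B2 E.
      have := congr1 (fun w : {ffun colT -> F} => \sum_(c in U) lam0 c * w c) E.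
      rewrite /= !sf (eqP B1) (eqP B2) !add0r => /(mulfI nz) y12.
      move: y12 => /= y12; rewrite -{}y12 in E *; congr (_, _); apply/ffunP => c.
      by have := congr1 (fun w : {ffun colT -> F} => w c) E; rewrite /= !ffunE => /addIr.
    have := subset_leq_card (subsetT (f @: setX [set: F] B)).
    by rewrite card_in_imset // cardsX cardsT cardsT card_ffun.
  + move=> v vB lam L Gu.
    have [G Gv] := glob0_upd Gu.
    have : (0 < #|x.2|)%N by case/and3P: gx => _ /eqP -> _.
    rewrite card_gt0 => /set0Pn [c cS].
    have lc0 : lam0 c != 0.
      apply/eqP => H; have := zero_from_c Hinv gx cS L0 G0 H c0U.
      by move/eqP: nz.
    set k := lam c / lam0 c.
    set mu := fun t => lam t - k * lam0 t.
    have lin : forall X : colT -> F,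
        \sum_(t in U) mu t * X t = \sum_(t in U) lam t * X t - k * \sum_(t in U) lam0 t * X t.
      move=> X; rewrite mulr_sumr -sumrB; apply: eq_bigr => t _.
      by rewrite /mu mulrBl mulrA.
    have Lmu : loc0 U mu by move=> i p; rewrite lin L L0 mulr0 subr0.
    have Gmu : glob0 d j U mu by move=> q qj; rewrite lin G // G0 // mulr0 subr0.
    have mu0 : mu c = 0 by rewrite /mu /k divfK // subrr.
    have Z := zero_from_c Hinv gx cS Lmu Gmu mu0.
    have lamE : forall t, t \in U -> lam t = k * lam0 t.
      by move=> t tU; apply/eqP; rewrite -subr_eq0; apply/eqP; apply: Z.
    have k0 : k = 0.
      move: Gv; rewrite (eq_bigr (fun t => k * (lam0 t * v t))); last first.
        by move=> t tU; rewrite lamE // mulrA.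
      rewrite -mulr_sumr => /eqP; rewrite mulf_eq0 => /orP [/eqP //|].
      by move: vB; rewrite inE => /negbTE ->.
    by move=> t tU; rewrite lamE // k0 mul0r.
- move=> nex; exists set0; split; first by rewrite cards0 muln0.
  move=> v _ lam L Gu t tU.
  have [G _] := glob0_upd Gu.
  apply/eqP; apply/negPn/negP => nz; apply: nex.
  by exists lam; split => //; exists t.
Qed.


Lemma card_bigcup_le (I T : finType) (P : pred I) (B : I -> {set T}) :
  (#|\bigcup_(i | P i) B i| <= \sum_(i | P i) #|B i|)%N.
Proof.
elim/big_rec2: _ => [|i s X _ H]; first by rewrite cards0.
rewrite cardsU.
apply: leq_trans (leq_subr _ _) _; by rewrite leq_add2l.
Qed.

Lemma step d j : Inv d j -> (#|[set x | good j.+1 x]| < #|F|)%N ->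
  exists v : {ffun colT -> F}, Inv (upd d j v) j.+1.
Proof.
move=> Hinv Hc.
have : forall x : {set colT} * {set colT}, exists B : {set {ffun colT -> F}},
   good j.+1 x -> ((#|F| * #|B| <= #|F| ^ #|{: colT}|)%N /\
                   forall v, v \notin B -> indep (upd d j v) j.+1 (x.1 :|: x.2)).
  move=> x; case: (boolP (good j.+1 x)) => gx.
    by have [B HB] := bad_set Hinv gx; exists B.
  by exists set0.
case/fin_all_exists => Bf HB.
set P := [set x | good j.+1 x].
set Ball := \bigcup_(x in P) Bf x.
have q0 : (0 < #|F|)%N by apply/card_gt0P; exists 0.
have cB : (#|F| * #|Ball| < #|F| * #|F| ^ #|{: colT}|)%N.
  apply: (@leq_ltn_trans (#|F| * \sum_(x in P) #|Bf x|)).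
    by rewrite leq_mul2l card_bigcup_le orbT.
  rewrite big_distrr /=.
  apply: (@leq_ltn_trans (\sum_(x in P) #|F| ^ #|{: colT}|)).
    by apply: leq_sum => x; rewrite inE => gx; have [] := HB x gx.
  by rewrite sum_nat_const ltn_mul2r Hc andbT expn_gt0 q0.
have : ~~ ([set: {ffun colT -> F}] \subset Ball).
  apply/negP => /subset_leq_card; rewrite cardsT card_ffun => H.
  by move: cB; rewrite ltn_mul2l q0 /= ltnNge H.
case/subsetPn => v _ vn.
exists v => x gx; have [_ Hx] := HB x gx; apply: Hx.
by apply: contra vn => vB; apply/bigcupP; exists x; rewrite ?inE.
Qed.

Lemma greedy h : (forall j, (j < h)%N -> (#|[set x | good j.+1 x]| < #|F|)%N) ->
  exists d, Inv d h.
Proof.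
elim: h => [|h IH] Hc.
  exists (fun _ _ => 0) => x /and3P [_ /eqP /cards0_eq S0 /forallP cnt].
  move=> lam _ _ t; rewrite inE S0 inE orbF => tT.
  have := cnt t.1; rewrite /grp S0 imset0 inE cards_eq0 => /eqP /setP /(_ t).
  by rewrite !inE tT eqxx.
have [d Hd] := IH (fun j jh => Hc j (ltnW jh)).
have [v Hv] := step Hd (Hc h (ltnSn h)).
by exists (upd d h v).
Qed.


Lemma final h d : (0 < a)%N -> (a <= r)%N -> Inv d h ->
  is_MR_LRC AA (fun i : 'I_g => \matrix_(q < h, j < r) d q (i, j)).
Proof.
move=> a0 ar Hinv; split; first by move=> i; apply: vander_MDS.
move=> T S cnt dis cardS lam H.
set U := T :|: S.
have L : loc0 U lam by move=> i p; exact: (H (inl (i, p))).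
have G : glob0 d h U lam.
  move=> q qh; rewrite -[RHS](H (inr (Ordinal qh))); apply: eq_bigr => -[i j] _ /=.
  by rewrite mxE.
set T' := [set t in T | t.1 \in grp S].
have T'sub : T' \subset T by apply/subsetP => t; rewrite inE => /andP [].
have gT : good h (T', S).
  apply/and3P; split => /=.
  - exact: disjointWl T'sub dis.
  - by rewrite cardS.
  - apply/forallP => i; case: ifP => iS.
      have -> : [set t in T' | t.1 == i] = [set t in T | t.1 == i].
        apply/setP => t; rewrite !inE; case: (boolP (t.1 == i)) => [/eqP ->|];
          by rewrite ?iS ?andbT ?andbF.
      by rewrite cnt.
    rewrite cards_eq0; apply/eqP/setP => t; rewrite !inE.
    by case: (boolP (t.1 == i)) => [/eqP ->|]; rewrite ?iS ?andbF ?andbT.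
have Usub : T' :|: S \subset U by apply: setSU.
have Zout : forall t, t \in U -> t \notin T' :|: S -> lam t = 0.
  move=> t tU tn.
  have tS : t \notin S by apply: contra tn => tS; rewrite inE tS orbT.
  have tT : t \in T by move: tU; rewrite inE (negbTE tS) orbF.
  have tG : t.1 \notin grp S.
    by apply: contra tn => tG; rewrite inE; apply/orP; left; rewrite inE tT.
  apply: (@loc_group U lam t.1) => //.
  rewrite -(cnt t.1); apply: subset_leq_card; apply/subsetP => u.
  rewrite !inE => /andP [uU /eqP u1]; rewrite u1 eqxx andbT.
  move: uU => /orP [//|uS].
  by move: tG; rewrite -u1 in_grp.
have := Hinv _ gT lam (loc0_sub Usub Zout L) (glob0_sub Usub Zout G).
move=> Z t tU; case: (boolP (t \in T' :|: S)) => [|tn]; first exact: Z.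
exact: Zout.
Qed.


Lemma count_good j :
  (#|[set x | good j x]| <= 'C(#|{: colT}|, j) * 2 ^ (r * j))%N.
Proof.
set Q := \bigcup_(S : {set colT} | #|S| == j)
           [set (T, S) | T in powerset (setX (grp S) [set: 'I_r])].
have sub : [set x | good j x] \subset Q.
  apply/subsetP => -[T S]; rewrite inE => /and3P [_ cS /forallP cnt].
  apply/bigcupP; exists S => //; apply: imset_f; rewrite powersetE.
  apply/subsetP => -[t1 t2] tT; rewrite in_setX in_setT andbT /=.
  have := cnt t1; case: ifP => // _.
  by rewrite cards_eq0 => /eqP /setP /(_ (t1, t2)); rewrite !inE tT eqxx.
apply: (leq_trans (subset_leq_card sub)).
apply: (leq_trans (card_bigcup_le _ _)).
apply: (@leq_trans (\sum_(S : {set colT} | #|S| == j) 2 ^ (r * j))); last first.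
  rewrite sum_nat_const; have := card_draws colT j; rewrite cardsE => ->.
  by [].
apply: leq_sum => S /eqP cS.
apply: (leq_trans (leq_imset_card _ _)); rewrite card_powerset cardsX cardsT card_ord.
rewrite leq_exp2l // mulnC -cS leq_mul2l; apply/orP; right.
exact: leq_imset_card.
Qed.

End Greedy.

Lemma INR_expn (m e : nat) : INR (m ^ e) = (INR m ^ e)%R.
Proof. by rewrite expn_pow pow_INR. Qed.

Lemma count_final (m h r j k : nat) : (0 < r)%N -> (0 < h)%N -> (j < h)%N ->
  (2 * m ^ 2 <= h * r)%N -> (3 * 2 ^ r * r <= m)%N -> (h < m ^ 3)%N ->
  (m ^ (2 * h) < 2 ^ k.+1)%N ->
  ('C(m ^ 3, j.+1) * 2 ^ (r * j.+1) < 2 ^ k)%N.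
Proof.
move=> r0 h0 jh Hh Hm hn Hk.
set Y := 2 ^ r.
set n := m ^ 3.
set C := 'C(n, j.+1).
have Y0 : (0 < Y)%N by rewrite expn_gt0.
have HY : (2 ^ (r * j.+1) = Y ^ j.+1)%N by rewrite expnM.
have hnY : (h <= n * Y)%N by apply: leq_trans (ltnW hn) _; rewrite leq_pmulr.
have CB := count_bound n Y h j.+1 jh hnY.
have m0 : (0 < m)%N by apply: leq_trans Hm; rewrite !muln_gt0 Y0 r0.
have key : (6 * m ^ 3 * Y <= m ^ 2 * h)%N.
  rewrite -(leq_pmul2r r0).
  apply: (@leq_trans (2 * m ^ 3 * m)).
    have -> : (6 * m ^ 3 * Y * r = 2 * m ^ 3 * (3 * Y * r))%N by ring.
    by rewrite leq_mul2l Hm orbT.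
  have -> : (2 * m ^ 3 * m = m ^ 2 * (2 * m ^ 2))%N by ring.
  by rewrite -mulnA leq_mul2l Hh orbT.
have E1 : (m ^ (2 * h) * h ^ h = (m ^ 2 * h) ^ h)%N by rewrite expnMn expnM.
have E2 : ((6 * m ^ 3 * Y) ^ h = 2 ^ h * (3 ^ h * (n * Y) ^ h))%N.
  by rewrite -!expnMn; congr (_ ^ _); rewrite /n; ring.
have L1 : (2 * (C * Y ^ j.+1) * h ^ h <= m ^ (2 * h) * h ^ h)%N.
  rewrite E1; apply: (leq_trans _ (leq_expl _ _ h key)); rewrite E2.
  rewrite -mulnA; apply: leq_mul.
    by rewrite -{1}(expn1 2) leq_pexp2l.
  exact: CB.
have hh0 : (0 < h ^ h)%N by rewrite expn_gt0 h0.
rewrite leq_pmul2r // in L1.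
rewrite HY -/C.
have : (2 * (C * Y ^ j.+1) < 2 * 2 ^ k)%N.
  by apply: leq_ltn_trans L1 _; rewrite -expnS.
by rewrite ltn_mul2l.
Qed.

Lemma Rpower_cube (m : nat) (y : R) : (0 < m)%N ->
  Rpower (INR (m ^ 3)) y = Rpower (INR m) (3 * y).
Proof.
move=> m0; have hm : (0 < INR m)%R by apply: lt_0_INR; lia.
rewrite INR_expn -Rpower_pow // Rpower_mult; congr Rpower; rewrite /=; lra.
Qed.

Theorem theorem4p3 :
  exists c1 c2 : R, (0 < c1)%R /\ (0 < c2)%R /\
  forall a r : nat, (0 < a)%N -> (a <= r)%N ->
  forall N : nat, exists n : nat,
    (N <= n)%N /\ (r %| n)%N /\
    (Rpower (INR r) (c1 * INR r) <= INR n)%R /\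
    forall (eps : R) (h : nat),
      (0 < eps)%R -> (eps < 1 / 2)%R -> (0 < h)%N ->
      (c2 * Rpower (INR n) (2 / 3) / eps <= INR (h * r))%R ->
      (n %/ r * a + h < n)%N ->
      exists F : finFieldType,
        (INR #|F| <= Rpower (INR n) (2 * INR h / 3 * (1 + eps)))%R /\
        MR_LRC F n r h a.
Proof.
exists 1%R, 1%R; split; first lra; split; first lra.
move=> a r a0 ar N.
have r0 : (0 < r)%N by apply: leq_trans ar.
set t := (N + r ^ r + 3 * 2 ^ r + 1)%N.
set m := (r * t)%N.
have tm : (t <= m)%N by rewrite /m leq_pmull.
have m0 : (0 < m)%N by apply: leq_trans tm; rewrite /t addn1.
have mn : (m <= m ^ 3)%N by rewrite -{1}(expn1 m) leq_pexp2l.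
have Hm : (3 * 2 ^ r * r <= m)%N.
  rewrite /m mulnC leq_mul2l; apply/orP; right; rewrite /t; lia.
exists (m ^ 3); split.
  by apply: leq_trans mn; apply: leq_trans tm; rewrite /t; lia.
split.
  by apply: dvdn_exp => //; rewrite /m dvdn_mulr.
split.
  rewrite Rmult_1_l Rpower_pow; last by apply: lt_0_INR; lia.
  rewrite -INR_expn; apply: le_INR; apply/leP.
  apply: leq_trans mn; apply: leq_trans tm.
  rewrite /t; lia.
move=> eps h e0 e1 h0 Hh Hlt.
set n := (m ^ 3)%N.
have INRm : (0 < INR m)%R by apply: lt_0_INR; lia.
have Hh2 : (2 * m ^ 2 <= h * r)%N.
  move: Hh; rewrite /n Rpower_cube // Rmult_1_l.
  have -> : (3 * (2 / 3) = INR 2)%R by rewrite /=; lra.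
  rewrite Rpower_pow // -INR_expn => Hh.
  have : (INR (2 * m ^ 2) < INR (h * r))%R.
    rewrite mult_INR /=.
    have p0 : (0 < INR (m ^ 2))%R by apply: lt_0_INR; apply/ltP; rewrite expn_gt0 m0.
    apply: (Rlt_le_trans _ _ _ _ Hh).
    have : (2 < 1 / eps)%R.
      apply: (Rmult_lt_reg_r eps) => //; rewrite /Rdiv Rmult_1_l Rinv_l; lra.
    rewrite /Rdiv => H; nra.
  by move/INR_lt/ltP => H; apply: ltnW.
have hn : (h < n)%N by apply: leq_ltn_trans Hlt; apply: leq_addl.
set M := (m ^ (2 * h))%N.
have M0 : (0 < M)%N by rewrite expn_gt0 m0.
set k := trunc_log 2 M.
have Hk1 : (2 ^ k <= M)%N by apply: trunc_logP.
have Hk2 : (M < 2 ^ k.+1)%N by apply: trunc_log_ltn.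
have mM : (m <= M)%N by rewrite -{1}(expn1 m) leq_pexp2l // muln_gt0 h0.
have rk : (r <= 2 ^ k)%N.
  have : (2 * r < 2 ^ k.+1)%N.
    apply: leq_ltn_trans Hk2; apply: leq_trans mM; apply: leq_trans Hm.
    have p2 : (0 < 2 ^ r)%N by rewrite expn_gt0.
    rewrite leq_mul2r; apply/orP; right; lia.
  by rewrite expnS ltn_mul2l /= => /ltnW.
have k0 : (0 < k)%N.
  case: (posnP k) => // k0; move: Hk2; rewrite k0 /= => M1.
  have : (6 <= m)%N.
    apply: leq_trans Hm.
    have p2 : (2 <= 2 ^ r)%N by rewrite -{1}(expn1 2) leq_pexp2l.
    have : (3 * 2 ^ r <= 3 * 2 ^ r * r)%N by rewrite leq_pmulr.
    lia.
  lia.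
have [F _ cardF] := @pPrimePowerField 2 k (erefl true) k0.
exists F; split.
  rewrite cardF INR_expn.
  apply: (Rle_trans _ (INR M)).
    by rewrite -INR_expn; apply: le_INR; apply/leP.
  rewrite /M INR_expn -Rpower_pow // /n Rpower_cube //.
  have -> : INR (2 * h) = (3 * (2 * INR h / 3))%R by rewrite mult_INR /=; lra.
  apply: Rle_Rpower.
    by apply: (le_INR 1); apply/leP.
  have : (0 <= INR h)%R by apply: pos_INR.
  nra.
set g := (n %/ r)%N.
have gr : (g * r = n)%N by rewrite /g divnK // /n; apply: dvdn_exp => //; rewrite /m dvdn_mulr.
split.
  apply/and5P; split => //; last by apply/andP; split => //; rewrite /n; apply: dvdn_exp => //; rewrite /m dvdn_mulr.
  by rewrite divn_gt0 // /n; apply: leq_trans mn; rewrite /m leq_pmulr // /t addn1.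
pose alpha (j : 'I_r) : F := nth (GRing.zero : F) (enum F) j.
have ainj : injective alpha.
  move=> i j /eqP; rewrite /alpha nth_uniq ?enum_uniq // -?cardE ?cardF;
    first by move/eqP/val_inj.
  - by apply: leq_trans (ltn_ord i) rk.
  - by apply: leq_trans (ltn_ord j) rk.
have [d Hd] : exists d, Inv (g:=g) a alpha d h.
  apply: greedy => // j jh.
  apply: leq_ltn_trans (count_good g r a j.+1) _.
  rewrite card_prod !card_ord gr cardF.
  exact: count_final r0 h0 jh Hh2 Hm hn Hk2.
eexists; eexists; exact: (final ainj a0 ar Hd).
Qed.
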